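(* Let $H=(V,E,w)$ be a hypergraph in which every vertex has positive degree and every hyperedge has rank at least $2$, and let $G$ be its clique reduction. If $f$ is an eigenvector of $D_G^{-1}J_G$ corresponding to its smallest eigenvalue $\lambda_1(D_G^{-1}J_G)$, then $$\frac{f^\top J_H f}{f^\top D_H f}\le\lambda_1(D_G^{-1}J_G),$$ and the inequality is strict if $\min_{e\in E}\mathrm{rank}(e)>2$.
   Context: A hypergraph $H=(V,E,w)$ has vertex set $V$ with $|V|=n$, hyperedges $E$ (subsets of $V$), weights $w:E\to\mathbb{R}_{>0}$; $\mathrm{rank}(e)=|e|$, $\deg(v)=\sum_{e\ni v}w(e)$, $D_H=\mathrm{diag}(\deg(v))$. For $f\in\mathbb{R}^n$, $e\in E$: $\Delta_f(e)=\max_{u\in e}f(u)+\min_{v\in e}f(v)$, $S_f(e)=\{v\in e:f(v)=\max_{u\in e}f(u)\}$, $I_f(e)=\{v\in e:f(v)=\min_{u\in e}f(u)\}$. Operator $J_H$: for $f$, let $r\in\mathbb{R}^n$ be the unique vector for which there are numbers $r_e(v)$ with $r(v)=\sum_e r_e(v)$, $r_e(v)=0$ unless $v\in S_f(e)\cup I_f(e)$, and: (1) $\sum_{v\in S_f(e)}\deg(v)r_e(v)=\sum_{v\in I_f(e)}\deg(v)r_e(v)=-w(e)\Delta_f(e)$ for all $e$; (2a) if $|r_e(u)|>0$, $u\in S_f(e)$: when $\Delta_f(e)>0$, $r(u)=\max_{v\in S_f(e)}r(v)$, when $\Delta_f(e)<0$, $r(u)=r(v)$ for all $v\in S_f(e)$;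 (2b) if $|r_e(u)|>0$, $u\in I_f(e)$: when $\Delta_f(e)<0$, $r(u)=\min_{v\in I_f(e)}r(v)$, when $\Delta_f(e)>0$, $r(u)=r(v)$ for all $v\in I_f(e)$. Then $J_H f:=-D_H r$. (One has $f^\top J_H f=\sum_e w(e)\Delta_f(e)^2$.) Clique reduction $G$: the graph on $V$ in which, for each hyperedge $e$ and each pair of distinct $u,v\in e$, weight $w(e)/(\mathrm{rank}(e)-1)$ is added to edge $\{u,v\}$; $D_G$, $A_G$ are its degree and weighted adjacency matrices and $J_G=D_G+A_G$. *)

(* Defs.v *)
From HB Require Import structures.
From mathcomp Require Import all_boot all_order all_algebra.
Set Implicit Arguments. Unset Strict Implicit. Unset Printing Implicit Defensive.
Import Order.TTheory GRing.Theory Num.Theory.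
Local Open Scope ring_scope.

Section Hypergraph.
Variables (R : realFieldType) (n m : nat) (E : 'I_m -> {set 'I_n}) (w : 'I_m -> R).

(* max / min of a function over a (nonempty) set; 0 on the empty set (never used) *)
Definition maxE (g : 'I_n -> R) (A : {set 'I_n}) : R :=
  if [pick v in A] is Some v0 then \big[Num.max/g v0]_(v in A) g v else 0.
Definition minE (g : 'I_n -> R) (A : {set 'I_n}) : R :=
  if [pick v in A] is Some v0 then \big[Num.min/g v0]_(v in A) g v else 0.

Definition rankE (i : 'I_m) : nat := #|E i|.
Definition degH (v : 'I_n) : R := \sum_(i < m | v \in E i) w i.
Definition DH : 'M[R]_n := diag_mx (\row_v degH v).

Definition Delta (f : 'I_n -> R) (i : 'I_m) : R := maxE f (E i) + minE f (E i).
Definition Sf (f : 'I_n -> R) (i : 'I_m) : {set 'I_n} :=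
  [set v in E i | f v == maxE f (E i)].
Definition If (f : 'I_n -> R) (i : 'I_m) : {set 'I_n} :=
  [set v in E i | f v == minE f (E i)].

(* r is the vector from the definition of J_H applied to f *)
Definition is_Jr (f r : 'I_n -> R) : Prop :=
  exists re : 'I_m -> 'I_n -> R,
    (forall v, r v = \sum_(i < m) re i v) /\
    forall i : 'I_m,
      (forall v, v \notin Sf f i :|: If f i -> re i v = 0) /\
      (\sum_(v in Sf f i) degH v * re i v = - (w i * Delta f i)) /\
      (\sum_(v in If f i) degH v * re i v = - (w i * Delta f i)) /\
      (forall u, u \in Sf f i -> re i u != 0 ->
         (0 < Delta f i -> r u = maxE r (Sf f i)) /\
         (Delta f i < 0 -> forall v, v \in Sf f i -> r u = r v)) /\
      (forall u, u \in If f i -> re i u != 0 ->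
         (Delta f i < 0 -> r u = minE r (If f i)) /\
         (0 < Delta f i -> forall v, v \in If f i -> r u = r v)).

Definition JH_of (r : 'cV[R]_n) : 'cV[R]_n := - (DH *m r).

Definition AG : 'M[R]_n :=
  \matrix_(u, v) \sum_(i < m | [&& u \in E i, v \in E i & u != v])
                    w i / (rankE i).-1%:R.
Definition DG : 'M[R]_n := diag_mx (\row_u \sum_v AG u v).
Definition JG : 'M[R]_n := DG + AG.

End Hypergraph.

Definition quad (R : realFieldType) (n : nat) (f : 'cV[R]_n) (M : 'M[R]_n) : R :=
  (f^T *m M *m f) ord0 ord0.

Definition dotv (R : realFieldType) (n : nat) (f v : 'cV[R]_n) : R :=
  (f^T *m v) ord0 ord0.

(* Main.v *)
Require Import Defs.
From HB Require Import structures.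
From mathcomp Require Import all_boot all_order all_algebra.
From mathcomp Require Import ring lra.
From mathcomp Require Import complex.
Set Implicit Arguments. Unset Strict Implicit. Unset Printing Implicit Defensive.
Import Order.TTheory GRing.Theory Num.Theory.
Local Open Scope ring_scope.

Lemma rayleigh (R : rcfType) (n : nat) (S : 'M[R]_n) (y : 'rV[R]_n) :
  (0 < n)%N -> S^T = S ->
  exists mu, eigenvalue S mu /\ mu * (y *m y^T) 0 0 <= (y *m S *m y^T) 0 0.
Proof.
move=> n0 Ssym.
pose toC := real_complex R.
pose Sc := map_mx toC S.
have Sreal : Sc \is a mxOver Num.real.
  by apply/mxOverP => i j; rewrite mxE; apply/complex_realP; exists (S i j).
have Ssymc : Sc \is symmetricmx.
  rewrite qualifE expr0 scale1r map_mx_id //. apply/eqP; apply/matrixP => i j. rewrite !mxE; congr toC; by rewrite -{1}Ssym mxE.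
have Sherm := realsym_hermsym Ssymc Sreal.
have /orthomx_spectralP Seq := hermitian_normalmx Sherm.
have Pu := spectral_unitarymx Sc; have Punit := spectral_unit Sc.
have dreal := hermitian_spectral_diag_real Sherm.
move: Seq Pu Punit dreal.
set P := spectralmx Sc; set d := spectral_diag Sc => Seq Pu Punit dreal.
have dR j : d 0 j = (complex.Re (d 0 j))%:C%C.
  by rewrite RRe_real // (mxOverP dreal).
pose j0 := Order.arg_min (Ordinal n0) xpredT (fun j => complex.Re (d 0 j)).
have j0min : forall j, complex.Re (d 0 j0) <= complex.Re (d 0 j).
  by rewrite /j0; case: arg_minP => // k _ H j; exact: H.
exists (complex.Re (d 0 j0)); split.
  have : eigenvalue Sc (d 0 j0).
    apply/eigenvalueP; exists (row j0 P).
      rewrite {1}Seq !mulmxA rowE -(mulmxA _ P) mulmxV // mulmx1.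
      by rewrite -(rowE j0 (diag_mx d)) row_diag_mx -scalemxAl -rowE.
    apply/eqP => H0.
    have : 'e_j0 = row j0 P *m invmx P by rewrite rowE mulmxK.
    rewrite H0 mul0mx => /matrixP /(_ 0 j0); rewrite !mxE eqxx /= => /eqP.
    by rewrite eqxx oner_eq0.
  by rewrite dR eigenvalue_root_char -map_char_poly fmorph_root -eigenvalue_root_char.
pose yc := map_mx toC y.
pose u := P *m yc^T.
have ycr : map_mx Num.Def.conjC yc = yc.
  by apply/matrixP => i j; rewrite !mxE conj_Creal //; apply/complex_realP; eexists.
have Hz : yc *m invmx P = (u ^t Num.Def.conjC)%sesqui.
  by rewrite invmx_unitary // /u trmx_mul trmxK map_mxM ycr.
have E1 : (yc *m Sc *m yc^T) = (u ^t Num.Def.conjC)%sesqui *m diag_mx d *m u.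
  by rewrite {1}Seq !mulmxA Hz -!mulmxA.
have E2 : (yc *m yc^T) = (u ^t Num.Def.conjC)%sesqui *m u.
  by rewrite -Hz -mulmxA (mulmxA (invmx P)) mulVmx // mul1mx.
have E1' : (yc *m Sc *m yc^T) 0 0 = ((y *m S *m y^T) 0 0)%:C%C.
  by rewrite /yc /Sc map_trmx -!map_mxM mxE.
have E2' : (yc *m yc^T) 0 0 = ((y *m y^T) 0 0)%:C%C.
  by rewrite /yc map_trmx -!map_mxM mxE.
rewrite -lecR rmorphM /= -E1' -E2' E1 E2 mul_mx_diag !mxE mulr_sumr.
apply: ler_sum => j _; rewrite !mxE.
set s := \sum_(_ < _) _.
rewrite (mulrC (Num.Def.conjC s) (d 0 j)) -mulrA -subr_ge0 -mulrBl mulr_ge0 //.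
  by rewrite subr_ge0 dR lecR.
by rewrite mulrC mul_conjC_ge0.
Qed.

Section Helpers.
Variables (R : realFieldType) (n : nat).

Lemma maxE_ge (g : 'I_n -> R) (A : {set 'I_n}) v : v \in A -> g v <= maxE g A.
Proof.
rewrite /maxE; case: pickP => [v0 Hv0|H] Hv; first exact: le_bigmax_cond.
by move: (H v); rewrite /= Hv.
Qed.

Lemma minE_le (g : 'I_n -> R) (A : {set 'I_n}) v : v \in A -> minE g A <= g v.
Proof.
rewrite /minE; case: pickP => [v0 Hv0|H] Hv; first exact: bigmin_le_cond.
by move: (H v); rewrite /= Hv.
Qed.

Lemma maxE_mem (g : 'I_n -> R) (A : {set 'I_n}) v : v \in A ->
  exists2 p, p \in A & g p = maxE g A.
Proof.
rewrite /maxE; case: pickP => [v0 Hv0|H] Hv; last by move: (H v); rewrite /= Hv.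
apply: (big_ind (fun x => exists2 p, p \in A & g p = x)).
- by exists v0.
- move=> x y [p1 H1 <-] [p2 H2 <-].
  by case: (leP (g p1) (g p2)) => _; [exists p2 | exists p1].
- by move=> i Hi; exists i.
Qed.

Lemma minE_mem (g : 'I_n -> R) (A : {set 'I_n}) v : v \in A ->
  exists2 p, p \in A & g p = minE g A.
Proof.
rewrite /minE; case: pickP => [v0 Hv0|H] Hv; last by move: (H v); rewrite /= Hv.
apply: (big_ind (fun x => exists2 p, p \in A & g p = x)).
- by exists v0.
- move=> x y [p1 H1 <-] [p2 H2 <-].
  by case: (leP (g p1) (g p2)) => _; [exists p1 | exists p2].
- by move=> i Hi; exists i.
Qed.

Lemma quad_e (a b : 'I_n) (M : 'M[R]_n) :
  ((delta_mx 0 a : 'rV[R]_n) *m M *m (delta_mx 0 b : 'rV[R]_n)^T) 0 0 = M a b.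
Proof.
by rewrite -rowE -[row a M *m _]trmxK trmx_mul trmxK -rowE !mxE.
Qed.

Lemma quad_diag (g : 'cV[R]_n) (D : 'rV[R]_n) :
  quad g (diag_mx D) = \sum_v D 0 v * g v 0 ^+ 2.
Proof.
rewrite /quad mul_mx_diag !mxE; apply: eq_bigr => v _; rewrite !mxE.
by rewrite expr2; ring.
Qed.

End Helpers.

Section HG.
Variables (R : rcfType) (n m : nat) (E : 'I_m -> {set 'I_n}) (w : 'I_m -> R).
Hypothesis hrank : forall i, (2 <= rankE E i)%N.

Definition cw (i : 'I_m) : R := w i / (rankE E i).-1%:R.

Lemma km1_neq0 i : (rankE E i).-1%:R != 0 :> R.
Proof.
rewrite pnatr_eq0 -lt0n.
by have := hrank i; case: (rankE E i) => [|[|k]].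
Qed.

Lemma cwE i : cw i * (rankE E i).-1%:R = w i.
Proof. by rewrite /cw divfK // km1_neq0. Qed.

Lemma AG_sym u v : AG E w u v = AG E w v u.
Proof.
rewrite !mxE; apply: eq_bigl => i.
by rewrite andbCA eq_sym.
Qed.

Lemma AG_diag u : AG E w u u = 0.
Proof. by rewrite mxE big_pred0 // => i; rewrite eqxx !andbF. Qed.

Lemma rowsum_AG u : \sum_v AG E w u v = degH E w u.
Proof.
rewrite /degH.
under eq_bigr do rewrite mxE big_mkcond.
rewrite exchange_big /= [RHS]big_mkcond; apply: eq_bigr => i _.
case Hu: (u \in E i); last by rewrite big1.
rewrite -(big_mkcond (fun v => [&& true, v \in E i & u != v])) /=.
rewrite (eq_bigl (fun v => v \in E i :\ u)); last first.
  by move=> v; rewrite in_setD1 andbC eq_sym.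
have Hc : #|E i :\ u| = (rankE E i).-1 by rewrite /rankE (cardsD1 u (E i)) Hu.
by rewrite sumr_const Hc -[_ *+ _]mulr_natr divfK ?km1_neq0.
Qed.

Lemma DG_DH : DG E w = DH E w.
Proof.
by rewrite /DG /DH; congr diag_mx; apply/rowP => u; rewrite !mxE rowsum_AG.
Qed.


Variable f : 'cV[R]_n.
Local Notation g := (fun v => f v 0).
Definition s1 (A : {set 'I_n}) := \sum_(v in A) f v 0.
Definition s2 (A : {set 'I_n}) := \sum_(v in A) f v 0 ^+ 2.

Lemma quadE (M : 'M[R]_n) : quad f M = \sum_u \sum_v f u 0 * M u v * f v 0.
Proof.
rewrite /quad mxE exchange_big /=; apply: eq_bigr => v _.
by rewrite mxE mulr_suml; apply: eq_bigr => u _; rewrite mxE.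
Qed.

Lemma quadD (M N : 'M[R]_n) : quad f (M + N) = quad f M + quad f N.
Proof. by rewrite /quad mulmxDr mulmxDl mxE. Qed.

Lemma quadDH : quad f (DH E w) = \sum_i w i * s2 (E i).
Proof.
rewrite /DH quad_diag.
under eq_bigr do rewrite mxE /degH mulr_suml big_mkcond.
rewrite exchange_big /=; apply: eq_bigr => i _.
by rewrite /s2 mulr_sumr [RHS]big_mkcond.
Qed.

Lemma quadAG : quad f (AG E w) = \sum_i cw i * (s1 (E i) ^+ 2 - s2 (E i)).
Proof.
rewrite quadE.
have -> : \sum_u \sum_v f u 0 * AG E w u v * f v 0 =
  \sum_u \sum_v \sum_i (if [&& u \in E i, v \in E i & u != v] then
       cw i * (f u 0 * f v 0) else 0).
  apply: eq_bigr => u _; apply: eq_bigr => v _.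
  rewrite mxE mulr_sumr mulr_suml big_mkcond; apply: eq_bigr => i _.
  by case: ifP => _; rewrite /cw ?mulr0 ?mul0r //; ring.
under eq_bigr do rewrite exchange_big.
rewrite exchange_big; apply: eq_bigr => i _ /=.
transitivity (cw i * \sum_(u in E i) f u 0 * (s1 (E i) - f u 0)).
  rewrite mulr_sumr [RHS]big_mkcond; apply: eq_bigr => u _.
  case Hu: (u \in E i) => /=; last by rewrite big1.
  rewrite /s1 (big_setD1 u Hu) /= addrC addrK mulr_sumr mulr_sumr [RHS]big_mkcond.
  apply: eq_bigr => v _; rewrite in_setD1 eq_sym.
  by rewrite andbC.
apply: congr1; rewrite /s2 expr2 {1}/s1 mulr_suml -sumrB.
by apply: eq_bigr => u _; rewrite mulrBr expr2 mulrC.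
Qed.


Lemma quadJG : quad f (JG E w) =
  \sum_i (w i * s2 (E i) + cw i * (s1 (E i) ^+ 2 - s2 (E i))).
Proof. by rewrite /JG quadD DG_DH quadDH quadAG big_split. Qed.

Lemma dotvE (r : 'cV[R]_n) (re : 'I_m -> 'I_n -> R) :
  (forall v, r v 0 = \sum_i re i v) ->
  dotv f (JH_of E w r) = \sum_i - \sum_v f v 0 * (degH E w v * re i v).
Proof.
move=> hre; rewrite /dotv /JH_of mulmxN mxE /DH mul_diag_mx mxE.
rewrite sumrN exchange_big /=; congr (- _); apply: eq_bigr => v _.
by rewrite !mxE hre !mulr_sumr.
Qed.


Lemma edge (i : 'I_m) (re : 'I_n -> R) (hw : 0 < w i)
  (h0 : forall v, v \notin Sf E g i :|: If E g i -> re v = 0)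
  (hS : \sum_(v in Sf E g i) degH E w v * re v = - (w i * Delta E g i))
  (hI : \sum_(v in If E g i) degH E w v * re v = - (w i * Delta E g i)) :
  - \sum_v f v 0 * (degH E w v * re v) <=
     w i * s2 (E i) + cw i * (s1 (E i) ^+ 2 - s2 (E i)) /\
  ((2 < rankE E i)%N ->
   - \sum_v f v 0 * (degH E w v * re v) =
     w i * s2 (E i) + cw i * (s1 (E i) ^+ 2 - s2 (E i)) ->
   - \sum_v f v 0 * (degH E w v * re v) = w i * s2 (E i)).
Proof.
set a := maxE g (E i); set b := minE g (E i).
have [v0 Hv0] : exists v0, v0 \in E i.
  by apply/set0Pn; rewrite -card_gt0; have := hrank i; rewrite /rankE; case: #|E i|.
have hab : forall v, v \in E i -> b <= g v <= a.
  by move=> v Hv; rewrite (minE_le g Hv) (maxE_ge g Hv).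
have [p Hp Hpa] := maxE_mem g Hv0; have [q Hq Hqb] := minE_mem g Hv0.
rewrite -/a in Hpa; rewrite -/b in Hqb.
have inS v : (v \in Sf E g i) = (v \in E i) && (g v == a) by rewrite /Sf inE.
have inI v : (v \in If E g i) = (v \in E i) && (g v == b) by rewrite /If inE.
have hD : Delta E g i = a + b by [].
have [k' Hk] : exists k', rankE E i = k'.+2.
  by have := hrank i; case: (rankE E i) => [|[|k]] //; exists k.
have Hcw : cw i = w i / (k'%:R + 1).
  by rewrite /cw Hk /= -natr1.
have HT : - \sum_v f v 0 * (degH E w v * re v) =
    - (a * \sum_(v in Sf E g i) degH E w v * re v +
       b * \sum_(v | v \notin Sf E g i) degH E w v * re v).
  congr (- _); rewrite (bigID (mem (Sf E g i))) /= !mulr_sumr; congr (_ + _).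
    by apply: eq_bigr => v; rewrite inS => /andP [_ /eqP ->].
  apply: eq_bigr => v HvS.
  case HvI: (v \in If E g i).
    by move: HvI; rewrite inI => /andP [_ /eqP ->].
  by rewrite h0 ?mulr0 // in_setU HvI orbF.
have Hw1 : 0 < k'%:R + 1 :> R by rewrite ltr_pwDr // ler0n.
have hcw : 0 < cw i by rewrite Hcw divr_gt0.
have t_ge0 : forall X : {set 'I_n}, 0 <= \sum_(x in X) g x ^+ 2.
  by move=> X; apply: sumr_ge0 => x _; rewrite sqr_ge0.
case: (eqVneq a b) => [eab|nab].
  have allA : forall v, v \in E i -> g v = a.
    by move=> v Hv; have /andP [h1 h2] := hab v Hv; apply/eqP; rewrite eq_le h2 eab h1.
  have Hz : \sum_(v | v \notin Sf E g i) degH E w v * re v = 0.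
    apply: big1 => v HvS; rewrite h0 ?mulr0 // in_setU negb_or HvS /=.
    rewrite inI; apply/negP => /andP [HvA /eqP Hgv].
    by move: HvS; rewrite inS HvA Hgv eab eqxx.
  have Hs1 : s1 (E i) = (k'%:R + 2) * a.
    rewrite /s1 (eq_bigr (fun=> a)); last by move=> v Hv; rewrite allA.
    rewrite sumr_const -/(rankE E i) Hk -[_ *+ _]mulr_natl (_ : k'.+2%:R = k'%:R + 2) //.
    by rewrite -addn2 natrD.
  have Hs2 : s2 (E i) = (k'%:R + 2) * a ^+ 2.
    rewrite /s2 (eq_bigr (fun=> a ^+ 2)); last by move=> v Hv; rewrite allA.
    rewrite sumr_const -/(rankE E i) Hk -[_ *+ _]mulr_natl (_ : k'.+2%:R = k'%:R + 2) //.
    by rewrite -addn2 natrD.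
  rewrite HT hS Hz hD Hs1 Hs2 Hcw -eab.
  have key : w i * ((k'%:R + 2) * a ^+ 2) + w i / (k'%:R + 1) *
      (((k'%:R + 2) * a) ^+ 2 - (k'%:R + 2) * a ^+ 2) -
      - (a * - (w i * (a + a)) + a * 0) = w i * (2 * k'%:R + 2) * a ^+ 2.
    by field; rewrite lt0r_neq0.
  split.
    rewrite -subr_ge0 key mulr_ge0 ?sqr_ge0 // mulr_ge0 ?ltW //.
    by rewrite ltr_pwDr // mulr_ge0 // ler0n.
  move=> _ HTQ; have : w i * ((k'%:R + 2) * a ^+ 2) + w i / (k'%:R + 1) * (((k'%:R + 2) * a) ^+ 2 - (k'%:R + 2) * a ^+ 2) - - (a * - (w i * (a + a)) + a * 0) == 0 by rewrite -HTQ subrr.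
  rewrite key.
  have H2 : (2 * k'%:R + 2 == 0 :> R) = false.
    by apply: gt_eqF; rewrite ltr_pwDr // mulr_ge0 // ler0n.
  by rewrite !mulf_eq0 (gt_eqF hw) H2 /= orbb => /eqP ->; ring.
have Hpq : p != q by apply: contraNneq nab => epq; rewrite -Hpa -Hqb epq.
have HqX : q \in E i :\ p by rewrite in_setD1 eq_sym Hpq Hq.
have HcX : #|E i :\ p :\ q| = k'.
  have h1 := cardsD1 p (E i); have h2 := cardsD1 q (E i :\ p).
  rewrite Hp HqX in h1 h2; move: Hk; rewrite /rankE h1 h2 !add1n.
  by case.
set X := E i :\ p :\ q in HcX *.
have XA : forall x, x \in X -> x \in E i by move=> x; rewrite !in_setD1 => /and3P [].
set sX := \sum_(x in X) g x; set tX := \sum_(x in X) g x ^+ 2.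
have Hs1 : s1 (E i) = a + (b + sX) by rewrite /s1 (big_setD1 p Hp) (big_setD1 q HqX) Hpa Hqb.
have Hs2 : s2 (E i) = a ^+ 2 + (b ^+ 2 + tX).
  by rewrite /s2 (big_setD1 p Hp) (big_setD1 q HqX) Hpa Hqb.
have Hz : \sum_(v | v \notin Sf E g i) degH E w v * re v =
          \sum_(v in If E g i) degH E w v * re v.
  rewrite [LHS]big_mkcond [RHS]big_mkcond; apply: eq_bigr => v _.
  case HvS: (v \in Sf E g i); case HvI: (v \in If E g i) => //=.
    move: HvS HvI; rewrite inS inI => /andP [_ /eqP h1] /andP [_ /eqP h2].
    by move: nab; rewrite -h1 -h2 eqxx.
  by rewrite h0 ?mulr0 // in_setU HvS HvI.
set P := \sum_(x in X) (g x - b) * (a - g x).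
have HP : P = (a + b) * sX - tX - a * b * k'%:R.
  rewrite /P (eq_bigr (fun x => (a + b) * g x - g x ^+ 2 - a * b)); last by move=> x _; ring.
  by rewrite !sumrB -mulr_sumr sumr_const HcX mulr_natr.
have P_ge0 : 0 <= P.
  apply: sumr_ge0 => x /XA Hx; have /andP [h1 h2] := hab x Hx.
  by rewrite mulr_ge0 // subr_ge0.
have tX_ge0 : 0 <= tX := t_ge0 X.
rewrite HT Hz hS hI hD Hs1 Hs2 Hcw.
have key : w i * (a ^+ 2 + (b ^+ 2 + tX)) +
    w i / (k'%:R + 1) * ((a + (b + sX)) ^+ 2 - (a ^+ 2 + (b ^+ 2 + tX))) -
    - (a * - (w i * (a + b)) + b * - (w i * (a + b))) =
    w i / (k'%:R + 1) * ((k'%:R + 2) * tX + sX ^+ 2 + 2 * P).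
  by rewrite HP; field; rewrite lt0r_neq0.
have k'ge0 : 0 <= k'%:R :> R by rewrite ler0n.
have hu : 0 <= (k'%:R + 2) * tX by rewrite mulr_ge0 // addr_ge0.
have hs : 0 <= sX ^+ 2 by rewrite sqr_ge0.
split.
  rewrite -subr_ge0 key mulr_ge0 //; first by rewrite divr_ge0 // ltW.
  by rewrite !addr_ge0 // mulr_ge0.
move=> hk HTQ.
have := key; rewrite -HTQ subrr => /esym /eqP; rewrite mulf_eq0 mulf_eq0 (gt_eqF hw) /=.
rewrite invr_eq0 (gt_eqF Hw1) /= => /eqP hsum.
have hu0 : (k'%:R + 2) * tX = 0 by lra.
have hs0 : sX ^+ 2 = 0 by lra.
have hP0 : P = 0 by lra.
have tX0 : tX = 0.
  by move/eqP: hu0; rewrite mulf_eq0 => /orP [|/eqP //]; rewrite gt_eqF // ltr_wpDl.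
have sX0 : sX = 0 by apply/eqP; rewrite -(sqrf_eq0 sX) hs0.
have hab0 : a * b = 0.
  move: HP; rewrite hP0 tX0 sX0 mulr0 !sub0r oppr0 sub0r => /eqP; rewrite eq_sym oppr_eq0 mulf_eq0.
  case/orP => [/eqP //|]; rewrite pnatr_eq0; move: hk; rewrite Hk; by case: (k') Hk.

rewrite tX0; transitivity (w i * (a ^+ 2 + (b ^+ 2 + 0)) + 2 * w i * (a * b)); first by ring.
by rewrite hab0; ring.
Qed.

End HG.


Lemma quad_y (R : rcfType) n (a b : 'I_n) (M : 'M[R]_n) :
  let y := (delta_mx 0 a - delta_mx 0 b : 'rV[R]_n) in
  (y *m M *m y^T) 0 0 = M a a - M a b - M b a + M b b.
Proof.
have H (A B : 'M[R]_1) : (A - B) 0 0 = A 0 0 - B 0 0 by rewrite !mxE.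
move=> y; rewrite /y raddfB /= !mulmxBl !mulmxBr !H !quad_e.
by ring.
Qed.

Lemma lam_lt1 (R : rcfType) (n m : nat) (E : 'I_m -> {set 'I_n}) (w : 'I_m -> R)
  (hw : forall i, 0 < w i)
  (hdeg : forall v, 0 < degH E w v)
  (hrank : forall i, (2 <= rankE E i)%N)
  (v0 : 'I_n) (lam : R)
  (hmin : forall mu, eigenvalue (invmx (DG E w) *m JG E w) mu -> lam <= mu) :
  lam < 1.
Proof.
have n0 : (0 < n)%N := leq_ltn_trans (leq0n _) (ltn_ord v0).
have [i Hi] : exists i, v0 \in E i.
  apply/existsP; move: (hdeg v0); apply: contraTT; rewrite negb_exists => /forallP H.
  by rewrite /degH big_pred0 ?ltxx // => k; exact/negbTE/H.
have [u0 Hu0] : exists u0, u0 \in E i :\ v0.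
  apply/set0Pn; rewrite -card_gt0.
  have := hrank i; rewrite /rankE (cardsD1 v0 (E i)) Hi.
  by case: #|E i :\ v0|.
have uv : u0 != v0 by move: Hu0; rewrite in_setD1 => /andP [].
have HuE : u0 \in E i by move: Hu0; rewrite in_setD1 => /andP [].
have hAG : 0 < AG E w u0 v0.
  rewrite mxE (bigD1 i) /=; last by rewrite HuE Hi uv.
  apply: ltr_wpDr; first by apply: sumr_ge0 => k _; rewrite divr_ge0 ?ler0n // ltW.
  by rewrite divr_gt0 // ltr0n; have := hrank i; case: (rankE E i) => [|[|k]].
pose sq u := Num.sqrt (degH E w u).
have hsq u : 0 < sq u by rewrite sqrtr_gt0.
pose S' := \matrix_(a, b) (AG E w a b / (sq a * sq b)) : 'M[R]_n.
have Ssym : S'^T = S'.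
  apply/matrixP => a b; rewrite !mxE (mulrC (sq b)).
  by rewrite (eq_bigl (fun k => [&& a \in E k, b \in E k & a != b])) // => k; rewrite andbCA eq_sym.
have [mu [hmu hray]] := rayleigh (delta_mx 0 u0 - delta_mx 0 v0) n0 Ssym.
have hyy : ((delta_mx 0 u0 - delta_mx 0 v0 : 'rV[R]_n) *m
            (delta_mx 0 u0 - delta_mx 0 v0 : 'rV[R]_n)^T) 0 0 = 2.
  have := quad_y u0 v0 (1%:M : 'M[R]_n); rewrite /= mulmx1 => ->.
  rewrite !mxE eqxx (negbTE uv) eq_sym (negbTE uv) eqxx /=; lra.
have hSd a : S' a a = 0 by rewrite mxE (@AG_diag _ _ _ E w) mul0r.
have hSs : S' v0 u0 = S' u0 v0 by rewrite -{1}Ssym mxE.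
have hSp : 0 < S' u0 v0 by rewrite mxE divr_gt0 // mulr_gt0.
have hySy := quad_y u0 v0 S'; rewrite /= in hySy.
rewrite hyy hySy !hSd hSs in hray.
have mu_neg : mu < 0 by lra.
case/eigenvalueP: hmu => v' hv' v'0.
pose u := \row_j (v' 0 j * sq j) : 'rV[R]_n.
pose u' := \row_j (v' 0 j / sq j) : 'rV[R]_n.
have hu'D : u' *m DH E w = u.
  rewrite /DH mul_mx_diag; apply/rowP => j; rewrite !mxE.
  rewrite -[degH E w j](@sqr_sqrtr _ _ (ltW (hdeg j))) -/(sq j).
  by field; rewrite lt0r_neq0.
have Dunit : DH E w \in unitmx.
  rewrite unitmxE det_diag unitfE; apply/prodf_neq0 => j _.
  by rewrite mxE gt_eqF.
have huD : u *m invmx (DH E w) = u' by rewrite -hu'D mulmxK.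
have hM : invmx (DG E w) *m JG E w = 1%:M + invmx (DH E w) *m AG E w.
  by rewrite /JG (@DG_DH _ _ _ E w hrank) mulmxDr mulVmx.
have hu'A : u' *m AG E w = mu *: u.
  apply/rowP => j; have := congr1 (fun M : 'rV[R]_n => M 0 j) hv'.
  rewrite [X in X = _]mxE [X in _ = X]mxE => H.
  rewrite [LHS]mxE [RHS]mxE [X in _ = _ * X]mxE.
  transitivity ((mu * v' 0 j) * sq j); last by rewrite mulrA.
  rewrite -H mulr_suml; apply: eq_bigr => k _.
  rewrite [u' 0 k]mxE [S' k j]mxE.
  by field; rewrite !lt0r_neq0.
have eig : eigenvalue (invmx (DG E w) *m JG E w) (1 + mu).
  apply/eigenvalueP; exists u.
    by rewrite hM mulmxDr mulmx1 mulmxA huD hu'A scalerDl scale1r.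
  apply: contraNneq v'0 => hu0.
  apply/eqP/rowP => j.
  have := congr1 (fun M : 'rV[R]_n => M 0 j) hu0; rewrite !mxE => /eqP.
  by rewrite mulf_eq0 (gt_eqF (hsq j)) orbF => /eqP.
by have := hmin _ eig; lra.
Qed.

Theorem lemma8 (R : rcfType) (n m : nat) (E : 'I_m -> {set 'I_n}) (w : 'I_m -> R)
  (hEinj : injective E)
  (hw : forall i, 0 < w i)
  (hdeg : forall v, 0 < degH E w v)
  (hrank : forall i, (2 <= rankE E i)%N)
  (lam : R) (f : 'cV[R]_n)
  (hlam : eigenvalue (invmx (DG E w) *m JG E w) lam)
  (hmin : forall mu, eigenvalue (invmx (DG E w) *m JG E w) mu -> lam <= mu)
  (hf0 : f != 0)
  (hf : (invmx (DG E w) *m JG E w) *m f = lam *: f)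
  (r : 'cV[R]_n)
  (hr : is_Jr E w (fun v => f v ord0) (fun v => r v ord0)) :
  dotv f (JH_of E w r) / quad f (DH E w) <= lam /\
  ((forall i, (2 < rankE E i)%N) ->
     dotv f (JH_of E w r) / quad f (DH E w) < lam).
Proof.
have DGH := @DG_DH _ _ _ E w hrank.
case: hr => re [hre hri].
have [v0 Hv0] : exists v, f v 0 != 0.
  apply/existsP; move: hf0; apply: contraNT; rewrite negb_exists => /forallP H.
  by apply/eqP/matrixP => i j; rewrite ord1 mxE; apply/eqP; rewrite -[_ == _]negbK H.
have hq : 0 < quad f (DH E w).
  rewrite /DH quad_diag (bigD1 v0) //= mxE.
  have h1 : 0 < degH E w v0 * f v0 0 ^+ 2.
    by rewrite mulr_gt0 // lt0r sqr_ge0 sqrf_eq0 Hv0.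
  have h2 : 0 <= \sum_(i < n | i != v0) (\row_v degH E w v) 0 i * f i 0 ^+ 2.
    by apply: sumr_ge0 => i _; rewrite mxE mulr_ge0 ?sqr_ge0 // ltW.
  by lra.
have Dunit : DH E w \in unitmx.
  rewrite unitmxE det_diag unitfE; apply/prodf_neq0 => i _.
  by rewrite mxE gt_eqF.
have hJ : JG E w *m f = lam *: (DH E w *m f).
  have hf2 : invmx (DH E w) *m (JG E w *m f) = lam *: f by rewrite -DGH mulmxA.
  by rewrite -[JG E w *m f](mulKVmx Dunit) hf2 scalemxAr.
have hQ : quad f (JG E w) = lam * quad f (DH E w).
  by rewrite /quad -mulmxA hJ -scalemxAr mxE mulmxA.
rewrite (@quadJG _ _ _ E w hrank f) in hQ.
rewrite (@dotvE _ _ _ E w f r re hre).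
have hedge i := @edge _ _ _ E w hrank f i (re i) (hw i) (proj1 (hri i)) (proj1 (proj2 (hri i)))
   (proj1 (proj2 (proj2 (hri i)))).
have hTQ : \sum_i - \sum_v f v 0 * (degH E w v * re i v) <=
    \sum_i (w i * s2 f (E i) + cw E w i * (s1 f (E i) ^+ 2 - s2 f (E i))).
  by apply: ler_sum => i _; exact: (proj1 (hedge i)).
split.
  by rewrite ler_pdivrMr // -hQ.
move=> hk.
have lam_lt1 : lam < 1 := lam_lt1 hw hdeg hrank v0 hmin.
rewrite ltr_pdivrMr // ltNge; apply/negP => hge.
pose T i := - \sum_v f v 0 * (degH E w v * re i v).
pose Q i := w i * s2 f (E i) + cw E w i * (s1 f (E i) ^+ 2 - s2 f (E i)).
have heq : forall i, T i = Q i.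
  have H := @psumr_eq0P _ _ xpredT (fun i => Q i - T i).
  move=> i; apply/eqP; rewrite eq_sym -subr_eq0; apply/eqP; apply: (H _ _ i isT).
    by move=> k _; rewrite subr_ge0 (proj1 (hedge k)).
  rewrite sumrB; apply/eqP; rewrite subr_eq0 eq_le; apply/andP; split.
    by apply: (le_trans _ hge); rewrite -hQ lexx.
  exact: hTQ.
have hsum : \sum_i - \sum_v f v 0 * (degH E w v * re i v) = quad f (DH E w).
  rewrite (@quadDH _ _ _ E w f); apply: eq_bigr => i _.
  by apply: (proj2 (hedge i)) (hk i) (heq i).
have hTQe : \sum_i T i = \sum_i Q i by apply: eq_bigr => i _; exact: heq.
have h1 : quad f (DH E w) = lam * quad f (DH E w).
  by rewrite -hQ -hsum.
have : lam = 1.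
  by apply: (mulIf (lt0r_neq0 hq)); rewrite mul1r -h1.
by move=> hl; move: lam_lt1; rewrite hl ltxx.
Qed.
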